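(* Let $A$ be a nonempty finite set of positive integers. Then \[ M(\sup A) \le \sum_{d=1}^{\sup A} \mu(d)\, 2^{v(A,d)}, \] and equality holds if and only if $\gcd(A)>1$.
   Context: $\sup A$ is the largest element of $A$. $\mu$ is the Möbius function and $M(N)=\sum_{d=1}^N\mu(d)$ is the Mertens function. For a positive integer $d$, $v(A,d)$ is the number of multiples of $d$ in $A$. *)

(* Defs.v *)
From mathcomp Require Import all_boot all_order all_algebra.
From mathcomp Require Import finmap.
Set Implicit Arguments. Unset Strict Implicit. Unset Printing Implicit Defensive.
Import GRing.Theory Num.Theory.
Local Open Scope fset_scope.

Definition mobius (d : nat) : int :=
  if [forall p : 'I_d.+1, (prime p) ==> ~~ (p * p %| d)]%N
  then ((-1) ^+ size (primes d))%R else 0%R.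

Definition mertens (N : nat) : int := (\sum_(1 <= d < N.+1) mobius d)%R.

Definition supA (A : {fset nat}) : nat := (\max_(a <- A) a)%N.

Definition vAd (A : {fset nat}) (d : nat) : nat := #|` [fset a in A | d %| a]|.

Definition gcdA (A : {fset nat}) : nat := \big[gcdn/0%N]_(a <- A) a.

(* Main.v *)
Require Import Defs.
From mathcomp Require Import all_boot all_order all_algebra.
From mathcomp Require Import finmap.
From mathcomp Require Import zify ring.
Import GRing.Theory Num.Theory.
Local Open Scope fset_scope.

Definition sqf (n : nat) := [forall p : 'I_n.+1, (prime p) ==> ~~ (p * p %| n)]%N.

Lemma sqfP n : (0 < n)%N -> reflect (forall q, prime q -> ~~ (q * q %| n))%N (sqf n).
Proof.
move=> n0; apply: (iffP forallP) => [H q pq|H q].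
  apply/negP => qqn.
  have qn : (q < n.+1)%N.
    rewrite ltnS; apply: leq_trans (dvdn_leq n0 qqn).
    by rewrite leq_pmulr // prime_gt0.
  by move: (H (Ordinal qn)) => /= /implyP /(_ pq) /negP.
by apply/implyP => /H.
Qed.

Lemma mobiusE n : mobius n = if sqf n then ((-1) ^+ size (primes n))%R else 0%R.
Proof. by []. Qed.

Lemma primes_pd p d : prime p -> (0 < d)%N -> ~~ (p %| d)%N ->
  size (primes (p * d)) = (size (primes d)).+1.
Proof.
move=> pp d0 npd.
have p0 := prime_gt0 pp.
have -> : size (primes (p * d)) = size (p :: primes d); last by [].
apply/perm_size/uniq_perm.
- exact: primes_uniq.
- by rewrite /= primes_uniq mem_primes pp d0 (negbTE npd).
move=> q; rewrite inE !mem_primes muln_gt0 p0 d0 /=.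
case: (boolP (prime q)) => pq /=; last first.
  by rewrite orbF; case: eqP => // qp; move: pq; rewrite qp pp.
by rewrite Euclid_dvdM // dvdn_prime2.
Qed.

Lemma mobius_pd p d : prime p -> (0 < d)%N ->
  mobius (p * d) = if (p %| d)%N then 0%R else (- mobius d)%R.
Proof.
move=> pp d0; have p0 := prime_gt0 pp.
have pd0 : (0 < p * d)%N by rewrite muln_gt0 p0.
case: (boolP (p %| d)%N) => pd; rewrite !mobiusE.
  case: (sqfP _ pd0) => // H.
  by move: (H p pp); rewrite dvdn_pmul2l // pd.
rewrite primes_pd ?pd // exprS mulN1r.
have -> : sqf (p * d) = sqf d; last by case: ifP; rewrite ?oppr0.
apply/(sameP (sqfP _ pd0))/(iffP (sqfP _ d0)) => H q pq.
- case: (eqVneq q p) => [->|qp].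
    by rewrite dvdn_pmul2l // (negbTE pd).
  have cq : coprime (q * q) p.
    by rewrite coprimeMl coprime_sym prime_coprime // dvdn_prime2 // eq_sym qp.
  by rewrite Gauss_dvdr // H.
- case: (eqVneq q p) => [->|qp].
    apply: contra pd => /(dvdn_trans _); apply; exact: dvdn_mulr.
  have cq : coprime (q * q) p.
    by rewrite coprimeMl coprime_sym prime_coprime // dvdn_prime2 // eq_sym qp.
  by rewrite -(Gauss_dvdr _ cq) H.
Qed.

Lemma mobius1 : mobius 1 = 1%R.
Proof.
rewrite mobiusE; case: (sqfP 1 (isT : (0 < 1)%N)) => // H.
exfalso; apply: H => q pq; apply/negP => /(@dvdn_leq _ 1 isT).
by rewrite leqNgt (leq_trans (prime_gt1 pq)) // leq_pmulr // prime_gt0.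
Qed.

Lemma perm_sum (s t : seq nat) (F : nat -> int) : uniq s -> uniq t -> s =i t ->
  (\sum_(x <- s) F x = \sum_(x <- t) F x)%R.
Proof. by move=> us ut st; apply: perm_big; apply: uniq_perm. Qed.

Lemma mobius_sum n : (0 < n)%N -> (\sum_(d <- divisors n) mobius d = (n == 1%N)%:R)%R.
Proof.
move=> n0; case: (ltngtP n 1) => [|n1|->]; first by rewrite ltnS leqNgt n0.
  move: (pdiv_prime n1) (pdiv_dvd n); move: (pdiv n) => p pp pn.
  have p0 := prime_gt0 pp.
  have np0 : (0 < n %/ p)%N by rewrite divn_gt0 // dvdn_leq.
  rewrite (bigID (fun d => p %| d)%N) /=.
  have -> : (\sum_(d <- divisors n | (p %| d)%N) mobius d =
     \sum_(e <- divisors (n %/ p)) mobius (p * e))%R.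
    rewrite -big_filter -(big_map (muln p) xpredT).
    apply: perm_sum.
    - by rewrite filter_uniq // divisors_uniq.
    - rewrite map_inj_uniq ?divisors_uniq //; by move=> x y /eqP; rewrite eqn_pmul2l // => /eqP.
    move=> x; rewrite mem_filter -dvdn_divisors //.
    apply/andP/mapP => [[/dvdnP [e ->] en]|[e ein ->]].
      exists e; last by rewrite mulnC.
      by rewrite -dvdn_divisors // -(@dvdn_pmul2r p) // divnK.
    split; first exact: dvdn_mulr.
    rewrite -dvdn_divisors // in ein.
    by rewrite -(divnK pn) mulnC dvdn_pmul2r.
  rewrite big_seq (eq_bigr (fun e => if ~~ (p %| e)%N then - mobius e else 0)%R); last first.
    move=> e; rewrite -dvdn_divisors // => /(dvdn_gt0 np0) e0.
    by rewrite mobius_pd //; case: (p %| e)%N.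
  rewrite -big_seq -big_mkcond /= sumrN.
  apply/eqP; rewrite addrC subr_eq0; apply/eqP.
  rewrite -[LHS]big_filter -[RHS]big_filter; apply: perm_sum; [exact: filter_uniq (divisors_uniq _)|exact: filter_uniq (divisors_uniq _)|].
  move=> e; rewrite !mem_filter -!dvdn_divisors //.
  case: (boolP (p %| e)%N) => //= npe.
  apply/idP/idP => en; last first.
    apply: dvdn_trans en _; apply/dvdnP; exists p; by rewrite mulnC divnK.
  have ce : coprime e p by rewrite coprime_sym prime_coprime.
  by rewrite -(Gauss_dvdl _ ce) divnK.
by rewrite /divisors /= big_seq1 mobius1.
Qed.

Definition PP (N g : nat) (s : seq nat) : int :=
  (\sum_(1 <= d < N.+1) (if (d %| g)%N then mobius d * 2 ^+ count (dvdn d) s else 0))%R.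
Definition gcdL (s : seq nat) : nat := \big[gcdn/0%N]_(a <- s) a.

Lemma PP_cons N g a s : PP N g (a :: s) = (PP N g s + PP N (gcdn g a) s)%R.
Proof.
rewrite /PP -big_split; apply: eq_bigr => d _ /=.
rewrite dvdn_gcd; case: (d %| g)%N; case: (d %| a)%N => /=; rewrite ?addr0 //.
by rewrite add1n exprS; ring.
Qed.

Lemma PP_nil N g : (0 < g <= N)%N -> PP N g [::] = (g == 1%N)%:R%R.
Proof.
case/andP => g0 gN.
rewrite /PP -mobius_sum // (eq_bigr (fun d => if (d %| g)%N then mobius d else 0%R)); last first.
  by move=> d _ /=; rewrite expr0 mulr1.
rewrite -big_mkcond /= -big_filter /index_iota subSS subn0.
apply: perm_sum; [exact: filter_uniq (iota_uniq _ _)|exact: divisors_uniq|].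
move=> d; rewrite mem_filter mem_iota -dvdn_divisors //.
case dg : (d %| g)%N => //=.
have d0 := dvdn_gt0 g0 dg.
by rewrite d0 add1n ltnS (leq_trans (dvdn_leq g0 dg) gN).
Qed.

Lemma PP_nil0 N : PP N 0 [::] = mertens N.
Proof. by apply: eq_bigr => d _; rewrite dvdn0 /= expr0 mulr1. Qed.

Lemma gcdL_cons a s : gcdL (a :: s) = gcdn a (gcdL s).
Proof. by rewrite /gcdL big_cons. Qed.

Lemma PP_pos N g s : (0 < g <= N)%N ->
  (0 <= PP N g s)%R /\ (PP N g s = 0%R <-> gcdn g (gcdL s) != 1%N).
Proof.
elim: s g => [|a s IH] g gN.
  rewrite PP_nil // /gcdL big_nil gcdn0; split; first by case: (g == 1%N).
  by case: (g == 1%N) => //=; split.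
have gN' : (0 < gcdn g a <= N)%N.
  case/andP: gN => g0 gN; rewrite gcdn_gt0 g0 /=.
  exact: leq_trans (dvdn_leq g0 (dvdn_gcdl _ _)) gN.
case: (IH g gN) => [H1 [H2 H3]]; case: (IH _ gN') => [H4 [H5 H6]].
rewrite PP_cons gcdL_cons gcdnA.
have imp : gcdn (gcdn g a) (gcdL s) != 1%N -> gcdn g (gcdL s) != 1%N.
  apply: contra => /eqP E; by rewrite gcdnAC E gcd1n.
split; first lia.
split.
  move=> E; apply: H5; lia.
move=> ne; have := H3 (imp ne); have := H6 ne; lia.
Qed.

Lemma PP_zero N s : all (fun a => 0 < a <= N)%N s ->
  (mertens N <= PP N 0 s)%R /\ (PP N 0 s = mertens N <-> gcdL s != 1%N).
Proof.
elim: s => [|a s IH] /=.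
  by rewrite PP_nil0 /gcdL big_nil; split.
case/andP => aN /IH [H1 [H2 H3]].
case: (PP_pos _ _ s aN) => [H4 [H5 H6]].
rewrite PP_cons gcd0n gcdL_cons.
have imp : gcdn a (gcdL s) != 1%N -> gcdL s != 1%N.
  apply: contra => /eqP ->; by rewrite gcdn1.
split; first lia.
split.
  move=> E; apply: H5; lia.
move=> ne; have := H3 (imp ne); have := H6 ne; lia.
Qed.

Lemma gcdL_gt0 s a : a \in s -> (0 < a)%N -> (0 < gcdL s)%N.
Proof.
elim: s => [|b s IH] //; rewrite inE gcdL_cons gcdn_gt0 => /orP [/eqP <- ->//|/IH H /H ->].
by rewrite orbT.
Qed.

Theorem theorem4p3 (A : {fset nat}) :
  A != fset0 -> (forall a, a \in A -> (0 < a)%N) ->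
  (mertens (supA A) <= \sum_(1 <= d < (supA A).+1) mobius d * 2 ^+ vAd A d)%R /\
  (mertens (supA A) = \sum_(1 <= d < (supA A).+1) mobius d * 2 ^+ vAd A d
     <-> (1 < gcdA A)%N)%R.
Proof.
move=> /fset0Pn [a0 a0A] Apos.
have -> : (\sum_(1 <= d < (supA A).+1) mobius d * 2 ^+ vAd A d)%R = PP (supA A) 0 A.
  apply: eq_bigr => d _; rewrite dvdn0 /vAd card_fset_sum1 -big_fset_condE sum1_count //.
have hall : all (fun a => 0 < a <= supA A)%N A.
  apply/allP => a aA; rewrite Apos //=.
  rewrite /supA; apply: (@leq_bigmax_seq _ _ xpredT (fun x => x)) => //.
case: (PP_zero _ _ hall) => H1 [H2 H3]; split => //.
have g0 : (0 < gcdA A)%N := gcdL_gt0 _ _ a0A (Apos _ a0A).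
have -> : (1 < gcdA A)%N = (gcdL A != 1%N) by move: g0; rewrite /gcdA -/(gcdL A); case: (gcdL A) => [|[|k]].
split => [E|/H3 ->] //; apply: H2; by rewrite E.
Qed.
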